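(* Let $A$ be a finite alphabet. If the sliding block code $\phi: A^{\mathbb{N}} \to A^{\mathbb{N}}$ is a local homeomorphism that $*$-commutes with the shift map $\sigma$, then $\phi$ is a $k$-fold covering map for some $k\in\mathbb{N}$.
   Context: $A$ is a finite set with the discrete topology; $\mathbb{N}=\{1,2,3,\dots\}$; $A^{\mathbb{N}}$ is the space of one-sided infinite sequences over $A$ with the product topology; $\sigma(x_1x_2x_3\cdots)=x_2x_3\cdots$. A sliding block code is a map $\tau_d: A^{\mathbb{N}}\to A^{\mathbb{N}}$, $\tau_d(x)_i=d(x_i\cdots x_{i+n-1})$, for some $n\in\mathbb{N}$ and function $d:A^n\to A$. A continuous map $f:X\to Y$ is a local homeomorphism if every $x\in X$ has an open neighborhood $U$ such that $f(U)$ is open in $Y$ and $f:U\to f(U)$ is a homeomorphism. Two functions $S,T: X\to X$ $*$-commute if $ST=TS$ and for every $(y,z)$ with $S(y)=T(z)$ there exists a unique $x$ with $T(x)=y$ and $S(x)=z$. For a continuous surjection $p:E\to B$, an open set $U\subseteq B$ is evenly covered if $p^{-1}(U)$ is a union of pairwise disjoint open sets $V_\alpha$ each of which $p$ maps homeomorphically onto $U$; $p$ is a covering map if every point of $B$ has an evenly covered open neighborhood, and a $k$-fold covering map if moreover $|p^{-1}(b)|=k$ for every $b\in B$. *)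

(* Defs.v *)
From HB Require Import structures.
From mathcomp Require Import all_boot all_order all_algebra.
From mathcomp Require Import all_classical all_reals all_analysis.
Set Implicit Arguments. Unset Strict Implicit. Unset Printing Implicit Defensive.
Local Open Scope classical_set_scope.

(* The full one-sided shift space A^N over a finite alphabet A:
   sequences indexed by nat (= {0,1,2,...}, a harmless reindexing of {1,2,...}),
   A carrying the discrete topology and A^N the product topology
   (topology of pointwise convergence). *)
Definition shift_space (A : finType) := {ptws nat -> discrete_topology A}.

Definition shift_map (A : finType) (x : shift_space A) : shift_space A :=
  fun i => x i.+1.

Definition sliding_block_code (A : finType) (phi : shift_space A -> shift_space A) :=
  exists n : nat, (0 < n)%N /\ exists d : ('I_n -> A) -> A,
    forall (x : shift_space A) (i : nat), phi x i = d (fun j : 'I_n => x (i + j)%N).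

Definition star_commute (X : Type) (S T : X -> X) :=
  (forall x, S (T x) = T (S x)) /\
  (forall y z, S y = T z -> exists! x, T x = y /\ S x = z).

Definition homeo_on (X Y : topologicalType) (f : X -> Y) (U : set X) (V : set Y) :=
  set_bij U V f /\
  exists g : Y -> X,
    (forall x, U x -> g (f x) = x) /\ (forall y, V y -> f (g y) = y) /\
    {within U, continuous f} /\ {within V, continuous g}.

Definition local_homeomorphism (X Y : topologicalType) (f : X -> Y) :=
  continuous f /\
  forall x, exists U : set X,
    [/\ open U, U x, open (f @` U) & homeo_on f U (f @` U)].

Definition evenly_covered (E B : topologicalType) (p : E -> B) (U : set B) :=
  open U /\
  exists (I : Type) (V : I -> set E),
    [/\ (forall i, open (V i)),
        (forall i j, i <> j -> V i `&` V j = set0),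
        p @^-1` U = \bigcup_(i in [set: I]) V i &
        (forall i, homeo_on p (V i) U)].

Definition covering_map (E B : topologicalType) (p : E -> B) :=
  [/\ continuous p, (forall b : B, exists e : E, p e = b) &
      forall b, exists U : set B, U b /\ evenly_covered p U].

Definition k_fold_covering (E B : topologicalType) (p : E -> B) (k : nat) :=
  covering_map p /\ forall b : B, (p @^-1` [set b] #= `I_k)%card.

(* Main.v *)
Require Import Defs.
From HB Require Import structures.
From mathcomp Require Import all_boot all_order all_algebra.
From mathcomp Require Import all_classical all_reals all_analysis.
Set Implicit Arguments. Unset Strict Implicit. Unset Printing Implicit Defensive.
Local Open Scope classical_set_scope.

Section S.
Variable A : finType.
Local Notation X := (shift_space A).

Definition agree (y x : X) m := forall i, (i < m)%N -> y i = x i.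

Lemma nbhs_coord (x : X) (t : nat) : nbhs x [set y : X | y t = x t].
Proof.
have h : {ptws, nbhs x --> (x : nat -> discrete_topology A)} by [].
move/(pointwise_cvgP _ _): h => /(_ t).
move/discrete_cvg => h; exact: h.
Qed.

Lemma nbhs_cyl0 (x : X) m : nbhs x [set y : X | agree y x m].
Proof.
elim: m => [|m IH].
  apply: filterS; last exact: filterT. by move=> y _ i.
apply: filterS; last exact: (filterI IH (nbhs_coord x m)).
move=> y [h1 h2] i.
rewrite ltnS leq_eqVlt => /orP [/eqP -> //|]; exact: h1.
Qed.

Definition cylF (x : X) : set_system X :=
  filter_from [set: nat] (fun m => [set y : X | agree y x m]).

Lemma nbhs_cyl (x : X) (P : set X) :
  nbhs x P <-> exists m, forall y, agree y x m -> P y.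
Proof.
split; last first.
  move=> [m hm]; apply: filterS; last exact: (nbhs_cyl0 x m). by move=> y; apply: hm.
have Fil : Filter (cylF x).
  apply: filter_from_filter; first by exists 0%N.
  move=> i j _ _; exists (maxn i j) => // y hy; split=> k hk; apply: hy;
  by rewrite (leq_trans hk) // ?leq_maxl ?leq_maxr.
have : {ptws, cylF x --> (x : nat -> discrete_topology A)}.
  apply/(pointwise_cvgP _ _) => t; apply/discrete_cvg.
  exists t.+1 => // y hy; exact: hy.
move=> /(_ P) h /h [m _ hm]; exists m => y hy; exact: hm.
Qed.

Lemma within_cyl (S : set X) (f : X -> X) :
  {within S, continuous f} <->
  forall y, S y -> forall L, exists L', forall y', S y' -> agree y' y L' ->
    agree (f y') (f y) L.
Proof.
rewrite subspace_continuousP; split.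
  move=> h y Sy L.
  have := h y Sy [set z | agree z (f y) L] (nbhs_cyl0 _ _).
  rewrite /= /within /= => /nbhs_cyl [L' hL']; exists L' => y' Sy' ay.
  exact: hL'.
move=> h y Sy P /nbhs_cyl [L hL].
have [L' hL'] := h y Sy L.
rewrite /= /within /=; apply/nbhs_cyl; exists L' => y' ay Sy'.
exact/hL/hL'.
Qed.

Lemma open_cyl (U : set X) : open U <-> forall x, U x -> exists m, forall y, agree y x m -> U y.
Proof.
rewrite openE; split => h x Ux; first exact/nbhs_cyl/h.
exact/nbhs_cyl/h.
Qed.

Lemma agree_le (y x : X) m n : agree y x m -> (n <= m)%N -> agree y x n.
Proof. by move=> h nm i im; apply: h; exact: leq_trans im nm. Qed.
Lemma agree_sym (y x : X) m : agree y x m -> agree x y m.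
Proof. by move=> h i im; rewrite h. Qed.
Lemma agree_trans (y x z : X) m : agree y x m -> agree x z m -> agree y z m.
Proof. by move=> h1 h2 i im; rewrite h1 ?h2. Qed.

Variable phi : X -> X.
Hypothesis hlh : local_homeomorphism phi.
Hypothesis hsc : star_commute phi (@shift_map A).

Lemma loc_inj x : exists m, forall y y', agree y x m -> agree y' x m ->
  phi y = phi y' -> y = y'.
Proof.
have [U [oU Ux _ [[_ inj _] _]]] := hlh.2 x.
have [m hm] := (open_cyl U).1 oU x Ux.
exists m => y y' ay ay' e; apply: inj => //; apply: mem_set; exact: hm.
Qed.

Lemma loc_lift z L : exists L', forall y', agree y' (phi z) L' ->
  exists z', agree z' z L /\ phi z' = y'.
Proof.
have [U [oU Uz oV [_ [g [gK [fK [_ gc]]]]]]] := hlh.2 z.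
have [L0 hL0] := (open_cyl U).1 oU z Uz.
have Vz : (phi @` U) (phi z) by exists z.
have [L2 hL2] := (within_cyl _ _).1 gc (phi z) Vz (maxn L L0).
have [L3 hL3] := (open_cyl _).1 oV (phi z) Vz.
exists (maxn L2 L3) => y' ay.
have Vy : (phi @` U) y' by apply: hL3; apply: agree_le ay _; rewrite leq_maxr.
exists (g y'); split; last exact: fK.
have := hL2 y' Vy (agree_le ay (leq_maxl _ _)).
rewrite gK // => h; apply: agree_le h _; exact: leq_maxl.
Qed.

Definition bad (w : X) m := exists y y', [/\ agree y w m, agree y' w m,
  phi y = phi y' & y <> y'].

Lemma bad_le w m n : bad w m -> (n <= m)%N -> bad w n.
Proof.
move=> [y [y' [a1 a2 e ne]]] nm; exists y, y'; split => //;
  exact: agree_le nm.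
Qed.

Lemma bad_agree w w' m : bad w m -> agree w w' m -> bad w' m.
Proof.
move=> [y [y' [a1 a2 e ne]]] aw; exists y, y'; split => //;
  exact: agree_trans aw.
Qed.

Definition upd (p : X) j (a : A) : X := fun i => if i == j then a else p i.

Definition Inf (p : X) j := forall L, exists w, agree w p j /\ bad w L.

Lemma Inf_step p j : Inf p j -> exists a, Inf (upd p j a) j.+1.
Proof.
move=> hI; apply: contrapT => hn.
have hn' : forall a, exists L, forall w, agree w (upd p j a) j.+1 -> ~ bad w L.
  move=> a; apply: contrapT => hc; apply: hn; exists a => L.
  apply: contrapT => hc2; apply: hc; exists L => w aw bw; apply: hc2.
  by exists w.
have [La hLa] := choice hn'.
have [w [aw bw]] := hI (\max_(a : A) La a).
apply: (hLa (w j) w); last by apply: bad_le bw _; exact: leq_bigmax.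
move=> i; rewrite ltnS leq_eqVlt /upd => /orP [/eqP ->|ij]; first by rewrite eqxx.
by rewrite (ltn_eqF ij) aw.
Qed.

Lemma uniform_rc : exists M, forall y y', phi y = phi y' -> agree y y' M -> y = y'.
Proof.
apply: contrapT => hn.
have H : forall m, exists y, bad y m.
  move=> m; apply: contrapT => hc; apply: hn; exists m => y y' e a.
  apply: contrapT => ne; apply: hc; exists y, y, y'; split => //.
  exact: agree_sym.
have [y0 _] := H 0%N.
pose a0 := y0 0%N.
have hs : forall pj : X * nat, exists a, Inf pj.1 pj.2 -> Inf (upd pj.1 pj.2 a) pj.2.+1.
  move=> [p j] /=; have [hI|hI] := pselect (Inf p j).
    by have [a ha] := Inf_step hI; exists a.
  by exists a0.
have [s hs'] := choice hs.
pose fix pp (j : nat) : X := if j is j'.+1 then upd (pp j') j' (s (pp j', j')) else (fun _ => a0).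
have I0 : forall j, Inf (pp j) j.
  elim => [|j IH] /=.
    move=> L; have [w bw] := H L; exists w; split => //.
  exact: (hs' (pp j, j) IH).
pose x : X := fun i => pp i.+1 i.
have ppx : forall i k, (i < k)%N -> pp k i = pp i.+1 i.
  move=> i; elim => [//|k IH]; rewrite ltnS leq_eqVlt => /orP [/eqP -> //|ik] /=.
  by rewrite /upd (ltn_eqF ik) IH.
have bx : forall j, bad x j.
  move=> j; have [w [aw bw]] := I0 j j.
  apply: bad_agree bw _ => i ij; rewrite aw // /x ppx //.
have [m hm] := loc_inj x.
have [y [y' [a1 a2 e ne]]] := bx m.
by apply: ne; apply: hm.
Qed.

Lemma bij_card (T U : Type) (B : set T) (C : set U) (f : T -> U) :
  set_bij B C f -> (B #= C)%card.
Proof. move=> h; have [g] : $|{bij B >-> C}| by apply/bijPex; exists f. exact: pcard_eq. Qed.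

Lemma shift_bij b : set_bij (phi @^-1` [set b]) (phi @^-1` [set shift_map b]) (@shift_map A).
Proof.
have [hc hu] := hsc; split.
- by move=> x /= <-; rewrite hc.
- move=> x y /set_mem /= hx /set_mem /= hy e.
  have [z [_ zu]] := hu (shift_map x) b ltac:(by rewrite hc hx).
  by rewrite -(zu x (conj erefl hx)) (zu y (conj (esym e) hy)).
- move=> y /= hy; have [z [[z1 z2] _]] := hu y b hy; by exists z.
Qed.

Variable M : nat.
Hypothesis hM : forall y y', phi y = phi y' -> agree y y' M -> y = y'.

Definition pre (x : X) : {ffun 'I_M -> A} := [ffun i : 'I_M => x (i : nat)].
Definition P (b : X) : {set {ffun 'I_M -> A}} :=
  [set v | `[< exists x, phi x = b /\ pre x = v >]].

Lemma inP v b : (v \in P b) <-> exists x, phi x = b /\ pre x = v.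
Proof. by rewrite inE asboolE. Qed.

Lemma pre_agree x y : pre x = pre y <-> agree x y M.
Proof.
split.
  by move=> /ffunP h i iM; have := h (Ordinal iM); rewrite !ffunE.
by move=> h; apply/ffunP => i; rewrite !ffunE h.
Qed.

Lemma fib_card b : (phi @^-1` [set b] #= `I_#|P b|)%card.
Proof.
apply: (@bij_card _ _ _ _ (fun x => index (pre x) (enum (P b)))); split.
- move=> x /= hx; rewrite cardE index_mem mem_enum; apply/inP; by exists x.
- move=> x y /set_mem /= hx /set_mem /= hy e.
  have mx : pre x \in enum (P b) by rewrite mem_enum; apply/inP; exists x.
  have my : pre y \in enum (P b) by rewrite mem_enum; apply/inP; exists y.
  have : pre x = pre y by rewrite -(nth_index (pre x) mx) e nth_index.
  by move/pre_agree; apply: hM; rewrite hx hy.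
- move=> i /= hi; rewrite cardE in hi.
  case E: (enum (P b)) hi => [//|v0 s] hi.
  have : nth v0 (enum (P b)) i \in P b by rewrite -mem_enum mem_nth // E.
  move/inP => [x [hx ex]]; exists x => //.
  by rewrite ex E index_uniq // -E enum_uniq.
Qed.

Lemma k_shift b : #|P (shift_map b)| = #|P b|.
Proof.
apply/esym/card_eq_II.
apply: card_eq_trans (card_esym (fib_card b)) _.

apply: card_eq_trans (bij_card (shift_bij b)) _.
exact: fib_card.
Qed.

Definition Lift b m := forall x, phi x = b -> forall y', agree y' b m ->
  exists x', agree x' x M /\ phi x' = y'.

Lemma lift_ex b : exists m, Lift b m.
Proof.
have h : forall v : {ffun 'I_M -> A}, exists L, forall x, phi x = b -> pre x = v ->
    forall y', agree y' b L -> exists x', agree x' x M /\ phi x' = y'.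
  move=> v; have [[x0 [h0 e0]]|hn] := pselect (exists x, phi x = b /\ pre x = v).
    have [L hL] := loc_lift x0 M; exists L => x hx ex y' ay.
    have -> : x = x0 by apply: hM; [rewrite hx h0|apply/pre_agree; rewrite ex e0].
    by apply: hL; rewrite h0.
  by exists 0%N => x hx ex; exfalso; apply: hn; exists x.
have [Lv hLv] := choice h.
exists (\max_v Lv v) => x hx y' ay.
apply: (hLv (pre x) x hx erefl); apply: agree_le ay _; exact: leq_bigmax.
Qed.

Lemma P_sub b m b' : Lift b m -> agree b' b m -> P b \subset P b'.
Proof.
move=> hL ab; apply/fintype.subsetP => v /inP [x [hx ev]].
have [x' [ax e]] := hL x hx b' ab.
apply/inP; exists x'; split => //; rewrite -ev; exact/pre_agree.
Qed.

Lemma iter_shift (c : X) j : iter j (@shift_map A) c = (fun i => c (i + j)%N) :> X.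
Proof.
elim: j => [|j IH] /=; first by apply: funext => i; rewrite addn0.
rewrite IH; apply: funext => i; by rewrite /shift_map addSnnS.
Qed.

Lemma k_iter (c : X) j : #|P (iter j (@shift_map A) c)| = #|P c|.
Proof. by elim: j => [//|j IH] /=; rewrite k_shift. Qed.

Lemma k_le b b' : (#|P b| <= #|P b'|)%N.
Proof.
have [m hm] := lift_ex b.
pose c : X := fun i => if (i < m)%N then b i else b' (i - m)%N.
have ac : agree c b m by move=> i im; rewrite /c im.
have -> : b' = iter m (@shift_map A) c.
  rewrite iter_shift; apply: funext => i; rewrite /c ltnNge leq_addl /= addnK //.
rewrite k_iter; apply: subset_leq_card; exact: P_sub hm ac.
Qed.

Lemma k_const b b' : #|P b| = #|P b'|.
Proof. by apply/eqP; rewrite eqn_leq !k_le. Qed.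

Lemma cont_cyl (f : X -> X) : continuous f ->
  forall y L, exists L', forall y', agree y' y L' -> agree (f y') (f y) L.
Proof.
move=> cf y L; have := cf y _ (nbhs_cyl0 (f y) L).
by move/nbhs_cyl => [L' hL']; exists L'; apply: hL'.
Qed.

Lemma even_cov b : exists U, U b /\ evenly_covered phi U.
Proof.
have [m hm] := lift_ex b.
have hcont := hlh.1.
pose U := [set y : X | agree y b m].
exists U; split; first by move=> i.
split.
  apply/open_cyl => y Uy; exists m => y' ay; exact: agree_trans ay Uy.
pose I := {x : X | phi x = b}.
pose V (i : I) := [set y : X | agree y (sval i) M /\ agree (phi y) b m].
exists I, V; split.
- move=> i; apply/open_cyl => y [a1 a2].
  have [L' hL'] := cont_cyl hcont y m.
  exists (maxn M L') => y' ay; split.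
    by apply: agree_trans a1; apply: agree_le ay (leq_maxl _ _).
  by apply: agree_trans a2; apply: hL'; apply: agree_le ay (leq_maxr _ _).
- move=> [xi pi] [xj pj] ne; rewrite -subset0 => y [[a1 _] [a2 _]]; apply: ne.
  have e : xi = xj.
    apply: hM; first by rewrite pi pj.
    exact: agree_trans (agree_sym a1) a2.
  by subst xj; rewrite (Prop_irrelevance pi pj).
- apply/seteqP; split; last by move=> y [i _ [_ a2]].
  move=> y /= ay.
  have sub := P_sub hm ay.
  have eqP' : P b = P (phi y).
    by apply/eqP; rewrite eqEcard sub /= (k_const (phi y) b).
  have : pre y \in P b by rewrite eqP'; apply/inP; exists y.
  move/inP => [x [hx ex]]; exists (exist _ x hx) => //; split => //=.
  by apply/pre_agree.
- move=> [xi pi]; rewrite /V /=.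
  have inj : set_inj (V (exist _ xi pi)) phi.
    move=> y y' /set_mem [a1 _] /set_mem [a2 _] e; apply: hM => //.
    exact: agree_trans (agree_sym a2).
  have hex : forall y, exists x', U y -> V (exist _ xi pi) x' /\ phi x' = y.
    move=> y; have [Uy|nU] := pselect (U y); last by exists xi.
    have [x' [ax e]] := hm xi pi y Uy; exists x' => _; split => //.
    by split => //; rewrite e.
  have [g hg] := choice hex.
  split; first split.
  + by move=> y [].
  + exact: inj.
  + by move=> y Uy; have [h1 h2] := hg y Uy; exists (g y).
  exists g; split.
    move=> y Vy; have [h1 h2] := hg (phi y) (proj2 Vy).
    by apply: inj => //; apply: mem_set.
  split; first by move=> y Uy; have [] := hg y Uy.
  split; first exact: continuous_subspaceT.
  apply/within_cyl => y Uy L.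
  have [[z1 z2] ez] := hg y Uy.
  have [L' hL'] := loc_lift (g y) (maxn L M).
  exists L' => y' Uy' ay'.
  have [z' [az' ez']] := hL' y' ltac:(by rewrite ez).
  have [[w1 w2] ew] := hg y' Uy'.
  have -> : g y' = z'.
    apply: hM; first by rewrite ew ez'.
    apply: agree_trans w1 _; apply: agree_sym.
    apply: agree_trans (agree_le az' (leq_maxr _ _)) z1.
  exact: agree_le az' (leq_maxl _ _).
Qed.
End S.

Theorem proposition5p13 (A : finType) (phi : shift_space A -> shift_space A) :
  sliding_block_code phi ->
  local_homeomorphism phi ->
  star_commute phi (@shift_map A) ->
  exists k : nat, (0 < k)%N /\ k_fold_covering phi k.
Proof.
move=> _ hlh hsc.
have [M hM] := uniform_rc hlh.
have [[x0 _]|hn] := pselect (exists x : shift_space A, True); last first.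
  exists 1%N; split => //; split; last by move=> b; exfalso; apply: hn; exists b.
  split; first exact: hlh.1.
    by move=> b; exfalso; apply: hn; exists b.
  by move=> b; exfalso; apply: hn; exists b.
exists #|P phi M x0|; split.
  rewrite (k_const hlh hsc hM x0 (phi x0)) card_gt0; apply/set0Pn.
  by exists (pre M x0); apply/inP; exists x0.
split; last first.
  by move=> b; rewrite (k_const hlh hsc hM x0 b); exact: fib_card hM b.
split; first exact: hlh.1.
  move=> b; have : (0 < #|P phi M b|)%N.
    rewrite (k_const hlh hsc hM b (phi b)) card_gt0; apply/set0Pn.
    by exists (pre M b); apply/inP; exists b.
  rewrite card_gt0 => /set0Pn [v /inP [x [hx _]]]; by exists x.
move=> b; have := even_cov hlh hsc hM b; exact.
Qed.
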